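(* Let $\mathcal{U},\mathcal{X}$ be Banach spaces with either $\mathcal{X}=\mathcal{U}^*$ or $\mathcal{U}=\mathcal{X}^*$ (duality pairing $\langle\cdot,\cdot\rangle_{\mathcal{U},\mathcal{X}}$), $\mathcal{W},\mathcal{Y}$ reflexive Banach spaces, $\mathcal{G}$ a Hilbert space, $g^\delta\in\mathcal{G}$, $\alpha>0$, $A\in L(\mathcal{Y},\mathcal{W}^* )$ continuously invertible, $B\in L(\mathcal{U},\mathcal{W}^* )$ admitting $B^*\in L(\mathcal{W},\mathcal{X})$ with $\langle Bu,w\rangle_{\mathcal{W}^*,\mathcal{W}}=\langle u,B^*w\rangle_{\mathcal{U},\mathcal{X}}$ for all $u\in\mathcal{U}$, $w\in\mathcal{W}$, and $C\in L(\mathcal{Y},\mathcal{G})$. Let $\mathcal{R}_\alpha$ be the indicator function of the closed ball $B^\mathcal{U}_{1/\alpha}=\{u\in\mathcal{U}:\|u\|_\mathcal{U}\le1/\alpha\}$ and $J_\alpha(u,y)=\frac12\|Cy-g^\delta\|_\mathcal{G}^2+\mathcal{R}_\alpha(u)$. Let $\mathcal{U}_h\subset\mathcal{U}$, $\mathcal{Y}_h\subset\mathcal{Y}$, $\mathcal{W}_h\subset\mathcal{W}$ be finite-dimensional subspaces. Let $(\bar u,\bar y)$ minimize $J_\alpha$ over $\mathcal{U}\times\mathcal{Y}$ subject to $Ay=Bu$, and let $(\bar u_h,\bar y_h)$ minimize $J_\alpha$ over $\mathcal{U}_h\times\mathcal{Y}_h$ subject to $\langle Ay-Bu,w_h\rangle_{\mathcal{W}^*,\mathcal{W}}=0$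 for all $w_h\in\mathcal{W}_h$. Let $\hat w\in\mathcal{W}$ be the solution of $C^*(C\bar y_h-g^\delta)+A^*\hat w=0$ and $\rho_y:=A\bar y_h-B\bar u_h$. Then $$\|C\bar y_h-C\bar y\|_\mathcal{G}^2\le\frac4\alpha\|B^*\hat w\|_\mathcal{X}-4\langle\bar u_h,B^*\hat w\rangle_{\mathcal{U},\mathcal{X}}+4\|CA^{-1}\rho_y\|_\mathcal{G}^2,$$ $$J_\alpha(\bar u_h,\bar y_h)-J_\alpha(\bar u,\bar y)\le\frac1\alpha\|B^*\hat w\|_\mathcal{X}-\langle\bar u_h,B^*\hat w\rangle_{\mathcal{U},\mathcal{X}}+\|CA^{-1}\rho_y\|_\mathcal{G}\,\|C\bar y_h-g^\delta\|_\mathcal{G}.$$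
   Context: $A^*\in L(\mathcal{W},\mathcal{Y}^* )$ and $C^*\in L(\mathcal{G},\mathcal{Y}^* )$ denote the adjoints defined by $\langle Ay,w\rangle_{\mathcal{W}^*,\mathcal{W}}=\langle y,A^*w\rangle_{\mathcal{Y},\mathcal{Y}^*}$ and $(Cy,g)_\mathcal{G}=\langle y,C^*g\rangle_{\mathcal{Y},\mathcal{Y}^*}$. *)

(* Defs.v *)
From HB Require Import structures.
From mathcomp Require Import all_boot all_order all_algebra.
From mathcomp Require Import all_classical all_reals all_analysis.
Set Implicit Arguments. Unset Strict Implicit. Unset Printing Implicit Defensive.
Import Order.TTheory GRing.Theory Num.Theory.
Import numFieldNormedType.Exports.
Local Open Scope classical_set_scope.
Local Open Scope ring_scope.

Section Defs.
Variable R : realType.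

Definition bounded_linear (E F : normedModType R) (f : E -> F) : Prop :=
  (forall (a : R) (x y : E), f (a *: x + y) = a *: f x + f y) /\ continuous f.

Definition cont_lin_functional (E : normedModType R) (f : E -> R) : Prop :=
  (forall (a : R) (x y : E), f (a *: x + y) = a * f x + f y) /\ continuous f.

(* F is (isometrically identified with) the dual space E^* through the
   pairing p : E -> F -> R, i.e.  p x y = <x, y>_{E,E^*}:
   p is bilinear, each p . y is a continuous linear functional on E with
   operator norm ||y||_F, and every continuous linear functional on E is
   represented by a unique y. *)
Definition is_dual_pairing (E F : normedModType R) (p : E -> F -> R) : Prop :=
  [/\ (forall y : F, cont_lin_functional (fun x => p x y)),
      (forall (x : E) (a : R) (y1 y2 : F), p x (a *: y1 + y2) = a * p x y1 + p x y2),
      (forall y : F, `|y| = sup [set r | exists x : E, `|x| <= 1 /\ r = p x y]) &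
      (forall f : E -> R, cont_lin_functional f ->
         exists! y : F, forall x : E, f x = p x y)].

(* E is reflexive, given its dual F (via the dual pairing p): every continuous
   linear functional on E^* = F is evaluation at some element of E. *)
Definition reflexive_via (E F : normedModType R) (p : E -> F -> R) : Prop :=
  forall phi : F -> R, cont_lin_functional phi ->
    exists x : E, forall y : F, phi y = p x y.

(* ip is an inner product on G inducing the norm of G (so a complete G is a
   Hilbert space). *)
Definition inner_product_of (G : normedModType R) (ip : G -> G -> R) : Prop :=
  [/\ (forall x y : G, ip x y = ip y x),
      (forall (a : R) (x y z : G), ip (a *: x + y) z = a * ip x z + ip y z) &
      (forall x : G, ip x x = `|x| ^+ 2)].

Definition fin_dim_subspace (V : lmodType R) (S : set V) : Prop :=
  exists (n : nat) (b : 'I_n -> V),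
    S = [set v | exists c : 'I_n -> R, v = \sum_(i < n) c i *: b i].

Definition Ralpha (U : normedModType R) (alpha : R) (u : U) : \bar R :=
  if `|u| <= alpha^-1 then 0%E else +oo%E.

Definition Jalpha (U Y G : normedModType R) (C : Y -> G) (g : G) (alpha : R)
    (u : U) (y : Y) : \bar R :=
  ((2^-1 * `|C y - g| ^+ 2)%:E + Ralpha alpha u)%E.

End Defs.

(* Main.v *)
Require Import Defs.
From HB Require Import structures.
From mathcomp Require Import all_boot all_order all_algebra.
From mathcomp Require Import all_classical all_reals all_analysis.
From mathcomp Require Import lra.
Import Order.TTheory GRing.Theory Num.Theory.
Import numFieldNormedType.Exports.
Local Open Scope classical_set_scope.
Local Open Scope ring_scope.

Set Implicit Arguments. Unset Strict Implicit.
Section Aux.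
Variable R : realType.

Lemma fl0 (E : normedModType R) (f : E -> R) :
  (forall (a : R) (x y : E), f (a *: x + y) = a * f x + f y) -> f 0 = 0.
Proof.
move=> h; have := h 1 0 0; rewrite scale1r addr0 mul1r => e.
by apply/esym/(addrI (f 0)); rewrite addr0 -e.
Qed.

Lemma clf_bounded (E : normedModType R) (f : E -> R) : cont_lin_functional f ->
  exists M, forall e : E, `|e| <= 1 -> f e <= M.
Proof.
move=> [hl hc]; have f0 := fl0 hl.
have := hc 0; move/cvgrPdist_lt => /(_ 1 ltr01).
rewrite f0 => /nbhs_ballP [d /= d0 hd].
exists (2 / d) => e e1.
have hx : ball (0:E) d ((d/2) *: e).
  rewrite -ball_normE /= sub0r normrN normrZ ger0_norm; last by lra.
  nra.
have := hd _ hx; rewrite sub0r normrN -[X in f X]addr0 hl f0 addr0 normrM.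
rewrite ger0_norm; last by lra.
have := ler_norm (f e).
rewrite ler_pdivlMr //; nra.
Qed.

Lemma clf_le_sup (E : normedModType R) (f : E -> R) : cont_lin_functional f ->
  forall e, f e <= `|e| * sup [set r | exists x : E, `|x| <= 1 /\ r = f x].
Proof.
move=> hf e; have [M hM] := clf_bounded hf.
case: hf => hl _; have f0 := fl0 hl.
have hs : has_sup [set r | exists x : E, `|x| <= 1 /\ r = f x].
  split; first by exists (f 0), 0; rewrite normr0.
  by exists M => r [x [hx ->]]; apply: hM.
have ub x : `|x| <= 1 -> f x <= sup [set r | exists x : E, `|x| <= 1 /\ r = f x].
  by move=> hx; apply: sup_upper_bound => //; exists x.
have [->|ne] := eqVneq e 0; first by rewrite f0 normr0 mul0r.
have n0 : 0 < `|e| by rewrite normr_gt0.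
have he : e = `|e| *: (`|e|^-1 *: e) + 0 by rewrite addr0 scalerA divff ?gt_eqF // scale1r.
rewrite {1}he hl f0 addr0; apply: ler_wpM2l; first exact: ltW.
apply: ub; rewrite normrZ ger0_norm; last by rewrite invr_ge0 ltW.
by rewrite mulVf ?gt_eqF.
Qed.

Lemma dual_le (E F : normedModType R) (p : E -> F -> R) :
  is_dual_pairing p -> forall x y, p x y <= `|x| * `|y|.
Proof. by case=> h1 _ h3 _ x y; rewrite (h3 y); apply: clf_le_sup (h1 y) x. Qed.

End Aux.
Section Aux2.
Variable R : realType.

Lemma op0 (E F : normedModType R) (f : E -> F) :
  (forall (a : R) (x y : E), f (a *: x + y) = a *: f x + f y) -> f 0 = 0.
Proof.
move=> h; have := h 1 0 0; rewrite scale1r addr0 scale1r => e.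
by apply/esym/(addrI (f 0)); rewrite addr0 -e.
Qed.

Lemma opB (E F : normedModType R) (f : E -> F) :
  (forall (a : R) (x y : E), f (a *: x + y) = a *: f x + f y) ->
  forall x y, f (x - y) = f x - f y.
Proof.
move=> h x y; have := h (-1) y x; rewrite !scaleN1r => e.
by rewrite addrC e addrC.
Qed.

Lemma pr0 (E F : normedModType R) (p : E -> F -> R) x :
  (forall (a : R) (y1 y2 : F), p x (a *: y1 + y2) = a * p x y1 + p x y2) ->
  p x 0 = 0.
Proof.
move=> h; have := h 1 0 0; rewrite scale1r addr0 mul1r => e.
by apply/esym/(addrI (p x 0)); rewrite addr0 -e.
Qed.

Lemma prB (E F : normedModType R) (p : E -> F -> R) x :
  (forall (a : R) (y1 y2 : F), p x (a *: y1 + y2) = a * p x y1 + p x y2) ->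
  forall y1 y2, p x (y1 - y2) = p x y1 - p x y2.
Proof.
move=> h y1 y2; have := h (-1) y2 y1; rewrite !scaleN1r mulN1r => e.
by rewrite addrC e addrC.
Qed.

Lemma prN (E F : normedModType R) (p : E -> F -> R) x :
  (forall (a : R) (y1 y2 : F), p x (a *: y1 + y2) = a * p x y1 + p x y2) ->
  forall y, p x (- y) = - p x y.
Proof.
move=> h y; by have := prB h 0 y; rewrite sub0r pr0 // sub0r.
Qed.

Section IP.
Variables (G : normedModType R) (ip : G -> G -> R) (hG : inner_product_of ip).

Lemma ipZl a x z : ip (a *: x) z = a * ip x z.
Proof.
case: hG => _ hl _; have := hl a x 0 z; rewrite addr0 => ->.
have := hl 1 0 0 z; rewrite scale1r addr0 mul1r => e.
suff -> : ip 0 z = 0 by rewrite addr0.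
by apply/esym/(addrI (ip 0 z)); rewrite addr0 -e.
Qed.

Lemma ipDl x y z : ip (x + y) z = ip x z + ip y z.
Proof. by case: hG => _ hl _; have := hl 1 x y z; rewrite scale1r mul1r. Qed.

Lemma ipBl x y z : ip (x - y) z = ip x z - ip y z.
Proof. by rewrite ipDl -scaleN1r ipZl mulN1r. Qed.

Lemma ipC x y : ip x y = ip y x.
Proof. by case: hG. Qed.

Lemma ipn x : ip x x = `|x| ^+ 2.
Proof. by case: hG. Qed.

Lemma normB2 x y : `|x - y| ^+ 2 = `|x| ^+ 2 - 2 * ip x y + `|y| ^+ 2.
Proof.
rewrite -!ipn ipBl ipC ipBl (ipC y (x - y)) ipBl (ipC y x); lra.
Qed.

Lemma cs x y : ip x y <= `|x| * `|y|.
Proof.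
have [->|yn] := eqVneq y 0.
  have -> : ip x 0 = 0 by rewrite -(scale0r (0:G)) (ipC x) ipZl mul0r.
  by rewrite normr0 mulr0.
have [->|xn] := eqVneq x 0.
  have -> : ip 0 y = 0 by rewrite -(scale0r (0:G)) ipZl mul0r.
  by rewrite normr0 mul0r.
have a0 : 0 < `|y| by rewrite normr_gt0.
have b0 : 0 < `|x| by rewrite normr_gt0.
have := normB2 (`|y| *: x) (`|x| *: y).
rewrite ipZl ipC ipZl !normrZ !ger0_norm ?normr_ge0 // => e.
have h : 0 <= `| `|y| *: x - `|x| *: y| ^+ 2 by apply: sqr_ge0.
rewrite e (ipC y x) in h. have ab := mulr_gt0 a0 b0. nra.
Qed.
End IP.
End Aux2.
Theorem proposition4p1 (R : realType)
  (U X W Wd Y Yd G : completeNormedModType R)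
  (pUX : U -> X -> R) (pW : W -> Wd -> R) (pY : Y -> Yd -> R) (ip : G -> G -> R)
  (hUX : is_dual_pairing pUX \/ is_dual_pairing (fun (x : X) (u : U) => pUX u x))
  (hW : is_dual_pairing pW) (hWrefl : reflexive_via pW)
  (hY : is_dual_pairing pY) (hYrefl : reflexive_via pY)
  (hG : inner_product_of ip)
  (gd : G) (alpha : R) (halpha : 0 < alpha)
  (A : Y -> Wd) (Ainv : Wd -> Y) (B : U -> Wd) (Bs : W -> X) (C : Y -> G)
  (As : W -> Yd) (Cs : G -> Yd)
  (hA : bounded_linear A) (hAinv : bounded_linear Ainv)
  (hAinvl : forall y, Ainv (A y) = y) (hAinvr : forall f, A (Ainv f) = f)
  (hB : bounded_linear B) (hBs : bounded_linear Bs)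
  (hBadj : forall (u : U) (w : W), pW w (B u) = pUX u (Bs w))
  (hC : bounded_linear C)
  (hAs : bounded_linear As) (hAadj : forall (y : Y) (w : W), pW w (A y) = pY y (As w))
  (hCs : bounded_linear Cs) (hCadj : forall (y : Y) (g : G), ip (C y) g = pY y (Cs g))
  (Uh : set U) (Yh : set Y) (Wh : set W)
  (hUh : fin_dim_subspace Uh) (hYh : fin_dim_subspace Yh) (hWh : fin_dim_subspace Wh)
  (ubar : U) (ybar : Y)
  (hcont_feas : A ybar = B ubar)
  (hcont_min : forall (u : U) (y : Y), A y = B u ->
      (Jalpha C gd alpha ubar ybar <= Jalpha C gd alpha u y)%E)
  (ubarh : U) (ybarh : Y)
  (hubarh : Uh ubarh) (hybarh : Yh ybarh)
  (hdisc_feas : forall wh : W, Wh wh -> pW wh (A ybarh - B ubarh) = 0)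
  (hdisc_min : forall (u : U) (y : Y), Uh u -> Yh y ->
      (forall wh : W, Wh wh -> pW wh (A y - B u) = 0) ->
      (Jalpha C gd alpha ubarh ybarh <= Jalpha C gd alpha u y)%E)
  (what : W) (hwhat : Cs (C ybarh - gd) + As what = 0) :
  let rhoy := A ybarh - B ubarh in
  `|C ybarh - C ybar| ^+ 2 <=
     4 / alpha * `|Bs what| - 4 * pUX ubarh (Bs what) + 4 * `|C (Ainv rhoy)| ^+ 2
  /\
  (Jalpha C gd alpha ubarh ybarh - Jalpha C gd alpha ubar ybar <=
     (alpha^-1 * `|Bs what| - pUX ubarh (Bs what)
      + `|C (Ainv rhoy)| * `|C ybarh - gd|)%:E)%E.
Proof.
move=> rhoy.
have [hAl _] := hA; have [hAil _] := hAinv; have [hBl _] := hB; have [hCl _] := hC.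
have [_ hW2 _ _] := hW; have [_ hY2 _ _] := hY.
have pUXle : forall u x, pUX u x <= `|u| * `|x|.
  move=> u x; case: hUX => h; first exact: dual_le.
  by rewrite mulrC; apply: (dual_le h).
have Cse : Cs (C ybarh - gd) = - As what.
  by apply/eqP; rewrite -addr_eq0 hwhat.
have F1 : ip (C (Ainv rhoy)) (C ybarh - gd) = - pW what rhoy.
  by rewrite hCadj Cse (prN (hY2 _)) -hAadj hAinvr.
have F2 : ip (C ybarh - C ybar) (C ybarh - gd) =
    - (pW what rhoy + pUX ubarh (Bs what) - pUX ubar (Bs what)).
  rewrite -(opB hCl) hCadj Cse (prN (hY2 _)) -hAadj (opB hAl) hcont_feas.
  by rewrite /rhoy !(prB (hW2 _)) -!hBadj; congr (- _); lra.
have Ral u : `|u| <= alpha^-1 -> Ralpha alpha u = 0%E.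
  by move=> h; rewrite /Ralpha h.
have J0 : Jalpha C gd alpha (0:U) (0:Y) = ((2^-1 * `|C 0 - gd| ^+ 2)%:E)%E.
  by rewrite /Jalpha Ral ?adde0 // normr0 invr_ge0 ltW.
have ball_of (u : U) (y : Y) : (Jalpha C gd alpha u y <= Jalpha C gd alpha (0%R:U) (0%R:Y))%E ->
    `|u| <= alpha^-1.
  rewrite J0 /Jalpha /Ralpha; by case: ifP.
have hub : `|ubar| <= alpha^-1.
  by apply: (ball_of _ ybar); apply: hcont_min; rewrite (op0 hAl) (op0 hBl).
have sub0 (V : normedModType R) (S : set V) : fin_dim_subspace S -> S 0.
  case=> n [b ->]; exists (fun _ => 0); rewrite big1 // => i _; exact: scale0r.
have hubh : `|ubarh| <= alpha^-1.
  apply: (ball_of _ ybarh); apply: hdisc_min; try exact: sub0.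
  by move=> wh _; rewrite (op0 hAl) (op0 hBl) subr0 pr0.
have F4 := @hcont_min ubarh (Ainv (B ubarh)) (hAinvr _).
have eB : B ubarh = A ybarh - rhoy by rewrite /rhoy opprB addrC subrK.
rewrite eB (opB hAil) hAinvl /Jalpha (opB hCl) addrAC !Ral // !adde0 lee_fin in F4.
have Cyb : C ybar - gd = (C ybarh - gd) - (C ybarh - C ybar).
  by rewrite [RHS]addrC opprB addrA subrK.
have hb1 := ler_wpM2r (normr_ge0 (Bs what)) hub.
have hb2 := ler_wpM2r (normr_ge0 (Bs what)) hubh.
have P1 := pUXle ubar (Bs what).
have P2 := pUXle ubarh (Bs what).
have CS := cs hG (C (Ainv rhoy)) (C ybarh - gd).
rewrite /Jalpha !Ral // !adde0 -EFinB lee_fin.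
move: F1 F2 F4 Cyb CS.
set e := C ybarh - gd; set r := C (Ainv rhoy); set z := C ybarh - C ybar.
move=> F1 F2 F4 Cyb CS.
rewrite Cyb (normB2 hG e z) (normB2 hG e r) (ipC hG e r) (ipC hG e z) F1 F2 in F4.
rewrite Cyb (normB2 hG e z) (ipC hG e z) F2.
have z2 := sqr_ge0 `|z|; have r2 := sqr_ge0 `|r|.
split; nra.
Qed.
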